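(* Let $p$ be a prime, $R$ an $F$-pure ring of characteristic $p$, and $f\in R$ a non-zero non-unit. Let $d\ge1$ be an integer and $\alpha\in[0,1]$ with $(p^d-1)\alpha\in\mathbb{N}$. If the inclusion $R\cdot f^{\langle\alpha\rangle_d}\subseteq R^{1/p^d}$ splits over $R$, then the inclusion $R\cdot f^{\langle\alpha\rangle_{ed}}\subseteq R^{1/p^{ed}}$ splits over $R$ for every integer $e\ge1$.
   Context: A ring $R$ of characteristic $p$ is $F$-pure if $R\subseteq R^{1/p}$ splits as a map of $R$-modules. Roots and splitting. $R^{1/p^e}$ is the ring of formal $p^e$-th roots of elements of $R$, containing $R$ via $r\mapsto(r^{p^e})^{1/p^e}$. For $a\in\mathbb{N}$, $f^{a/p^e}:=(f^a)^{1/p^e}$. The inclusion $R\cdot t\subseteq R^{1/p^e}$ splits over $R$ if some $R$-linear $\theta:R^{1/p^e}\to R$ has $\theta(t)=1$. Truncations. For $\alpha\in(0,1]$ with non-terminating base $p$ expansion $\alpha=\sum_{e\ge1}a_e/p^e$ (digits $0\le a_e\le p-1$, not all eventually zero), $\langle\alpha\rangle_e:=\sum_{i=1}^e a_i/p^i\in\frac1{p^e}\mathbb{N}$. By convention $\langle0\rangle_e=0$. *)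

(* Defs.v *)
From HB Require Import structures.
From mathcomp Require Import all_boot all_order all_algebra.
From mathcomp Require Import all_classical all_reals all_analysis.
Set Implicit Arguments. Unset Strict Implicit. Unset Printing Implicit Defensive.
Import Order.TTheory GRing.Theory Num.Theory.
Import numFieldNormedType.Exports.
Local Open Scope ring_scope.
Local Open Scope classical_set_scope.

(* Model of R^{1/p^e}: the element x^{1/p^e} (x : A) is represented by x
   itself; addition/multiplication are those of A, and the R-module structure is
   r . x^{1/p^e} = (r^{p^e} x)^{1/p^e}.  An R-linear map R^{1/p^e} -> R is thus
   an additive map theta : A -> A with theta (r^{p^e} * x) = r * theta x. *)
Definition root_linear (A : comNzRingType) (p e : nat) (theta : A -> A) : Prop :=
  (forall x y, theta (x + y) = theta x + theta y) /\
  (forall r x, theta (r ^+ (p ^ e) * x) = r * theta x).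

(* The inclusion R . t ⊆ R^{1/p^e} splits, where t = x^{1/p^e}. *)
Definition splits_root (A : comNzRingType) (p e : nat) (x : A) : Prop :=
  exists theta : A -> A, @root_linear A p e theta /\ theta x = 1.

(* F-pure: the inclusion R ⊆ R^{1/p}, r |-> (r^p)^{1/p}, splits as R-modules. *)
Definition F_pure (A : comNzRingType) (p : nat) : Prop :=
  exists theta : A -> A, @root_linear A p 1 theta /\ (forall r : A, theta (r ^+ p) = r).

Definition digit_psum (R : realType) (p : nat) (a : nat -> nat) (n : nat) : R :=
  \sum_(1 <= i < n.+1) (a i)%:R / (p%:R ^+ i).

(* a (indexed from 1; a 0 is irrelevant) is the non-terminating base p
   expansion of alpha. *)
Definition nonterm_expansion (R : realType) (p : nat) (alpha : R) (a : nat -> nat) : Prop :=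
  (forall i, (a i < p)%N) /\
  (forall m, exists i, (m < i)%N /\ a i <> 0%N) /\
  ((fun n => @digit_psum R p a n) @ \oo --> alpha).

(* The digit sequence used for truncations of alpha: the non-terminating
   expansion for alpha in (0,1], and the zero sequence for alpha = 0
   (convention <0>_e = 0). *)
Definition trunc_digits (R : realType) (p : nat) (alpha : R) (a : nat -> nat) : Prop :=
  (alpha = 0 /\ forall i, a i = 0%N) \/ (0 < alpha /\ @nonterm_expansion R p alpha a).

(* p^e * <alpha>_e = sum_{i=1}^e a_i p^{e-i}, a natural number; so
   f^{<alpha>_e} = (f^(trunc_num p a e))^{1/p^e}. *)
Definition trunc_num (p : nat) (a : nat -> nat) (e : nat) : nat :=
  (\sum_(1 <= i < e.+1) a i * p ^ (e - i))%N.

(* Main.v *)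
Require Import Defs.
From HB Require Import structures.
From mathcomp Require Import all_boot all_order all_algebra.
From mathcomp Require Import all_classical all_reals all_analysis.
From mathcomp Require Import ring lra.
Import Order.TTheory GRing.Theory Num.Theory.
Import numFieldNormedType.Exports.
Local Open Scope ring_scope.
Local Open Scope classical_set_scope.

Lemma lim_le_help (R : realType) (u : nat -> R) (l c : R) (m : nat) :
  u @ \oo --> l -> (forall k, (m <= k)%N -> u k <= c) -> l <= c.
Proof.
move=> ul H.
have <- : lim (u @ \oo) = l by apply: cvg_lim.
apply: limr_le; first by apply/cvg_ex; exists l.
by exists m.
Qed.
Lemma lim_ge_help (R : realType) (u : nat -> R) (l c : R) (m : nat) :
  u @ \oo --> l -> (forall k, (m <= k)%N -> c <= u k) -> c <= l.
Proof.
move=> ul H.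
have <- : lim (u @ \oo) = l by apply: cvg_lim.
apply: limr_ge; first by apply/cvg_ex; exists l.
by exists m.
Qed.

Lemma trunc_numS p a m : trunc_num p a m.+1 = (trunc_num p a m * p + a m.+1)%N.
Proof.
rewrite /trunc_num big_nat_recr //= subnn expn0 muln1; congr (_ + _)%N.
rewrite big_distrl /=; apply: eq_big_nat => i /andP[_ Hi].
by rewrite -mulnA -expnSr subSn.
Qed.

Lemma psumS (R : realType) p a m :
  @digit_psum R p a m.+1 = @digit_psum R p a m + (a m.+1)%:R / p%:R ^+ m.+1.
Proof. by rewrite /digit_psum big_nat_recr. Qed.

Lemma psum0 (R : realType) p a : @digit_psum R p a 0 = 0.
Proof. by rewrite /digit_psum big_geq. Qed.

Lemma psum_trunc (R : realType) p a m : (0 < p)%N ->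
  p%:R ^+ m * @digit_psum R p a m = (trunc_num p a m)%:R.
Proof.
move=> p0; have pn0 : (p%:R : R) != 0 by rewrite pnatr_eq0 -lt0n.
elim: m => [|m IH]; first by rewrite psum0 mulr0 /trunc_num big_geq.
rewrite psumS trunc_numS natrD natrM -IH mulrDr exprS -mulrA [_ * (_ / _)]mulrC.
rewrite divfK; [ring | by rewrite mulf_neq0 ?expf_neq0].
Qed.

Lemma psum_mono (R : realType) p a m k : (m <= k)%N ->
  @digit_psum R p a m <= @digit_psum R p a k.
Proof.
elim: k => [|k IH]; first by rewrite leqn0 => /eqP->.
rewrite leq_eqVlt => /orP[/eqP->//|]; rewrite ltnS => /IH H.
rewrite psumS; apply: (le_trans H); rewrite lerDl.
by apply: divr_ge0; rewrite ?exprn_ge0.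
Qed.

Lemma psum_upper (R : realType) p a m k : (0 < p)%N -> (forall i, (a i < p)%N) ->
  (m <= k)%N ->
  @digit_psum R p a k <= @digit_psum R p a m + (p%:R ^+ m)^-1 - (p%:R ^+ k)^-1.
Proof.
move=> p0 ap; have pn0 : (p%:R : R) != 0 by rewrite pnatr_eq0 -lt0n.
elim: k => [|k IH]; first by rewrite leqn0 => /eqP->; rewrite addrK.
rewrite leq_eqVlt => /orP[/eqP->|]; first by rewrite addrK.
rewrite ltnS => /IH H; rewrite psumS.
have E : (p%:R ^+ k)^-1 - (p%:R ^+ k.+1)^-1 = (p%:R - 1) / (p%:R ^+ k.+1) :> R.
  by rewrite exprS; field; rewrite expf_neq0.
have : (a k.+1)%:R / p%:R ^+ k.+1 <= (p%:R ^+ k)^-1 - (p%:R ^+ k.+1)^-1 :> R.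
  rewrite E; apply: ler_wpM2r; first by rewrite invr_ge0 exprn_ge0.
  have := ap k.+1; rewrite -(ler_nat R) -natr1 => h; lra.
lra.
Qed.

Lemma trunc_bounds (R : realType) p (alpha : R) a m : (0 < p)%N ->
  @nonterm_expansion R p alpha a ->
  (trunc_num p a m)%:R < p%:R ^+ m * alpha <= (trunc_num p a m)%:R + 1.
Proof.
move=> p0 [ap [nt cv]]; have pn0 : (p%:R : R) != 0 by rewrite pnatr_eq0 -lt0n.
have pm0 : (0 : R) < p%:R ^+ m by rewrite exprn_gt0 // ltr0n.
rewrite -(@psum_trunc R p a m p0); apply/andP; split.
  rewrite ltr_pM2l //.
  have [i [mi ai]] := nt m.
  have H1 : digit_psum R p a i <= alpha.
    apply: (@lim_ge_help R _ _ _ i cv) => k ik; exact: psum_mono.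
  have H2 : digit_psum R p a m + (a i)%:R / p%:R ^+ i <= digit_psum R p a i.
    case: i mi ai H1 => [//|i] mi ai _.
    by rewrite psumS lerD2r psum_mono.
  have H3 : (0 : R) < (a i)%:R / p%:R ^+ i.
    by rewrite divr_gt0 ?exprn_gt0 ?ltr0n // lt0n; apply/eqP.
  lra.
have H : alpha <= digit_psum R p a m + (p%:R ^+ m)^-1.
  apply: (@lim_le_help R _ _ _ m cv) => k mk.
  have := @psum_upper R p a m k p0 ap mk.
  have : (0 : R) <= (p%:R ^+ k)^-1 by rewrite invr_ge0 exprn_ge0.
  lra.
have := ler_wpM2l (ltW pm0) H; rewrite mulrDr mulfV ?expf_neq0 //.
Qed.

Fixpoint G (p d e : nat) : nat := if e is e'.+1 then (1 + p ^ d * G p d e')%N else 0%N.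

Lemma keyeq (R : realType) p d (alpha : R) n e : (0 < p)%N ->
  (p ^ d - 1)%:R * alpha = n%:R ->
  p%:R ^+ (e * d) * alpha = (n * G p d e)%:R + alpha.
Proof.
move=> p0 H.
have H' : p%:R ^+ d * alpha = n%:R + alpha.
  move: H; rewrite natrB ?expn_gt0 ?p0 // natrX => H; rewrite -H; ring.
elim: e => [|e IH]; first by rewrite mul0n expr0 mul1r /= muln0 add0r.
rewrite mulSn exprD -mulrA IH /= !(natrM, natrD, natrX).
rewrite mulrDr H'; ring.
Qed.

Lemma nat_uniq (R : realType) (x y : nat) (z : R) :
  x%:R < z <= x%:R + 1 -> y%:R < z <= y%:R + 1 -> x = y.
Proof.
move=> /andP[h1 h2] /andP[h3 h4].
have : (x%:R < y%:R + 1 :> R) by lra.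
have : (y%:R < x%:R + 1 :> R) by lra.
rewrite !natr1 !ltr_nat !ltnS => a b; apply/eqP; rewrite eqn_leq a b.
done.
Qed.

Lemma trunc_G (R : realType) p d (alpha : R) n a e : (0 < p)%N ->
  0 <= alpha <= 1 -> (p ^ d - 1)%:R * alpha = n%:R ->
  @trunc_digits R p alpha a -> trunc_num p a (e * d) = (n * G p d e)%N.
Proof.
move=> p0 /andP[a0 a1] H [[al0 az]|[apos ne]].
  have n0 : n = 0%N.
    by apply/eqP; rewrite -(eqr_nat R) -H al0 mulr0.
  rewrite n0 mul0n /trunc_num big1 // => i _; by rewrite az.
apply: (@nat_uniq R _ _ (p%:R ^+ (e * d) * alpha)).
  exact: trunc_bounds.
rewrite (@keyeq R p d alpha n e p0 H); lra.
Qed.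

Theorem mainTheorem8 (A : comUnitRingType) (R : realType) (p : nat) (f : A)
  (d : nat) (alpha : R) (n : nat) (a : nat -> nat) :
  prime p -> p \in [pchar A] -> F_pure A p ->
  f != 0 -> f \isn't a GRing.unit ->
  (1 <= d)%N -> 0 <= alpha <= 1 -> (p ^ d - 1)%:R * alpha = n%:R ->
  @trunc_digits R p alpha a ->
  @splits_root A p d (f ^+ trunc_num p a d) ->
  forall e : nat, (1 <= e)%N -> @splits_root A p (e * d) (f ^+ trunc_num p a (e * d)).
Proof.
move=> pp _ _ _ _ _ ha H td.
have p0 : (0 < p)%N by apply: prime_gt0.
have TG := fun e => @trunc_G R p d alpha n a e p0 ha H td.
have E1 : trunc_num p a d = n by rewrite -{1}(mul1n d) TG /= muln0 addn0 muln1.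
rewrite E1.
move=> [th [[thD thM] th1]] e _.
rewrite TG.
elim: e => [|e IH].
  exists id; split; last by rewrite /= muln0 expr0.
  by split=> // r x; rewrite mul0n expn0 expr1.
have [ps [[psD psM] ps1]] := IH.
exists (fun x => ps (th x)); split; [split|].
- by move=> x y; rewrite thD psD.
- move=> r x; rewrite mulSn expnD mulnC exprM thM psM //.
- rewrite /= mulnDr muln1 mulnCA exprD mulnC exprM.
  by rewrite mulrC thM th1 mulr1 ps1.
Qed.
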